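(* Let $\alpha=(\alpha_n)_{n\in\mathbb{N}}\in\ell^2$. The Rhaly operator $R_\alpha$ is compact on $\ell^2$ if and only if $\lim_{k\to\infty}\sigma_k=0$.
   Context: $\mathbb{N}=\{0,1,2,\dots\}$; $\ell^2$ is the space of square-summable functions $\mathbb{N}\to\mathbb{C}$. The Rhaly operator is $(R_\alpha f)(k)=\alpha_k\sum_{j=0}^k f(j)$. For $k\in\mathbb{N}$, $\sigma_k=\big(\sum_{j=2^k}^{2^{k+1}-1}(j+1)|\alpha_j|^2\big)^{1/2}$. *)

(* Defs.v *)
From Stdlib Require Import Reals.
From Coquelicot Require Import Coquelicot.
Open Scope R_scope.

Definition l2 (f : nat -> C) : Prop := ex_series (fun n => (Cmod (f n))^2).

Definition l2norm (f : nat -> C) : R := sqrt (Series (fun n => (Cmod (f n))^2)).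

Definition rhaly (alpha : nat -> C) (f : nat -> C) : nat -> C :=
  fun k => Cmult (alpha k) (sum_n f k).

Definition rhaly_sigma (alpha : nat -> C) (k : nat) : R :=
  sqrt (sum_n_m (fun j => INR (j + 1) * (Cmod (alpha j))^2)
                (2 ^ k) (2 ^ (S k) - 1)).

Definition compact_l2_op (T : (nat -> C) -> (nat -> C)) : Prop :=
  (forall f, l2 f -> l2 (T f)) /\
  (forall F : nat -> nat -> C,
      (forall n, l2 (F n)) ->
      (exists M : R, forall n, l2norm (F n) <= M) ->
      exists (phi : nat -> nat) (g : nat -> C),
        (forall n m, (n < m)%nat -> (phi n < phi m)%nat) /\
        l2 g /\
        is_lim_seq (fun n => l2norm (fun j => Cminus (T (F (phi n)) j) (g j))) 0).

(* Main.v *)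
Require Import Defs.
From Stdlib Require Import Reals.
From Coquelicot Require Import Coquelicot.
From Stdlib Require Import Lra Lia ZArith ClassicalEpsilon Classical.
Open Scope R_scope.

Fixpoint ps (a : nat -> R) (n : nat) : R :=
  match n with O => 0 | S n => ps a n + a n end.

Lemma sum_n_ps a N : sum_n a N = ps a (S N).
Proof.
  induction N as [|N IH].
  - rewrite sum_O. simpl. symmetry; apply Rplus_0_l.
  - rewrite sum_Sn, IH. reflexivity.
Qed.

Lemma ps_ext a b N : (forall n, (n < N)%nat -> a n = b n) -> ps a N = ps b N.
Proof.
  induction N as [|N IH]; intros H; simpl; auto.
  rewrite IH; [rewrite H; auto|]; intros; apply H; lia.
Qed.

Lemma ps_le a b N : (forall n, (n < N)%nat -> a n <= b n) -> ps a N <= ps b N.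
Proof.
  induction N as [|N IH]; intros H; simpl; [lra|].
  assert (ps a N <= ps b N) by (apply IH; intros; apply H; lia).
  assert (a N <= b N) by (apply H; lia). lra.
Qed.

Lemma ps_nonneg a N : (forall n, 0 <= a n) -> 0 <= ps a N.
Proof.
  intros H; induction N; simpl; [lra|]. specialize (H N); lra.
Qed.

Lemma ps_mono a N M : (forall n, 0 <= a n) -> (N <= M)%nat -> ps a N <= ps a M.
Proof.
  intros H HNM; induction HNM; [lra|]. simpl. specialize (H m); lra.
Qed.

Lemma ps_plus a b N : ps (fun n => a n + b n) N = ps a N + ps b N.
Proof. induction N; simpl; [lra|]. rewrite IHN; ring. Qed.

Lemma ps_scal c a N : ps (fun n => c * a n) N = c * ps a N.
Proof. induction N; simpl; [lra|]. rewrite IHN; ring. Qed.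

Lemma ps_zero N : ps (fun _ => 0) N = 0.
Proof. induction N; simpl; lra. Qed.

Lemma is_lim_seq_sum_n_ps a l : is_series a l -> is_lim_seq (sum_n a) l.
Proof. intros H. exact H. Qed.

Lemma ps_le_Series a : (forall n, 0 <= a n) -> ex_series a -> forall N, ps a N <= Series a.
Proof.
  intros Hpos Hex N.
  assert (Hl : is_lim_seq (sum_n a) (Series a)) by (apply Series_correct; auto).
  assert (Hc : forall n, sum_n a n <= Series a).
  { apply is_lim_seq_incr_compare; auto. intros n. rewrite sum_Sn. 
    specialize (Hpos (S n)). change (plus (sum_n a n) (a (S n))) with (sum_n a n + a (S n)). lra. }
  destruct N as [|N].
  - simpl. specialize (Hc 0%nat). rewrite sum_n_ps in Hc. simpl in Hc. specialize (Hpos 0%nat). lra.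
  - rewrite <- sum_n_ps. auto.
Qed.

Lemma bounded_ps_Series a B : (forall n, 0 <= a n) -> (forall N, ps a N <= B) ->
  ex_series a /\ Series a <= B.
Proof.
  intros Hpos HB.
  assert (Hinc : forall n, sum_n a n <= sum_n a (S n)).
  { intros n. rewrite sum_Sn. specialize (Hpos (S n)).
    change (plus (sum_n a n) (a (S n))) with (sum_n a n + a (S n)). lra. }
  assert (Hb : forall n, sum_n a n <= B) by (intros; rewrite sum_n_ps; auto).
  destruct (ex_finite_lim_seq_incr _ _ Hinc Hb) as [l Hl].
  assert (Hs : is_series a l) by exact Hl.
  split; [exists l; exact Hs|].
  rewrite (is_series_unique _ _ Hs).
  pose proof (is_lim_seq_le _ _ _ _ Hb Hl (is_lim_seq_const B)) as H. simpl in H. exact H.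
Qed.

Definition rs (a : nat -> R) (n len : nat) : R := ps (fun i => a (n + i)%nat) len.

Lemma ps_split a n len : ps a (n + len) = ps a n + rs a n len.
Proof.
  unfold rs. induction len as [|len IH]; simpl.
  - rewrite Nat.add_0_r. ring.
  - rewrite Nat.add_succ_r. simpl. rewrite IH. ring.
Qed.

Lemma CS_ps b L : (ps b L)^2 <= INR L * ps (fun i => b i ^ 2) L.
Proof.
  induction L as [|L IH].
  - simpl. lra.
  - change (ps b (S L)) with (ps b L + b L).
    change (ps (fun i => b i ^ 2) (S L)) with (ps (fun i => b i ^ 2) L + b L ^ 2).
    rewrite S_INR. set (A := ps b L) in *. set (B := ps (fun i => b i ^ 2) L) in *.
    set (x := b L). destruct (Nat.eq_dec L 0) as [->|HL].
    + unfold A, B, x. simpl. right; ring.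
    + assert (HLp : 0 < INR L) by (apply lt_0_INR; lia).
      assert (Hq : 0 <= (A - INR L * x)^2) by (apply pow2_ge_0).
      assert (H1 : INR L * (B + INR L * x^2 - 2 * A * x) >= 0) by nra.
      assert (H2 : B + INR L * x^2 - 2 * A * x >= 0).
      { destruct (Rle_or_lt 0 (B + INR L * x^2 - 2 * A * x)); [lra|nra]. }
      nra.
Qed.

Lemma pow2_gt n : (n < 2 ^ n)%nat.
Proof. induction n; simpl; lia. Qed.

Lemma pow2_pos n : (1 <= 2 ^ n)%nat.
Proof. induction n; simpl; lia. Qed.

Section Hardy.
Variables (a g : nat -> R) (s : R).
Hypothesis Ha : forall n, 0 <= a n.
Hypothesis Hg : forall n, 0 <= g n.
Hypothesis Hs : forall k, rs (fun j => INR (j + 1) * a j) (2 ^ k) (2 ^ k) <= s.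

Lemma s_nonneg : 0 <= s.
Proof.
  specialize (Hs 0%nat). eapply Rle_trans; [|exact Hs]. unfold rs. apply ps_nonneg.
  intros n. apply Rmult_le_pos; [apply pos_INR|apply Ha].
Qed.

Lemma hardy_dyadic K :
  ps (fun j => a j * (ps g (S j))^2) (2 ^ K)
    + 4 * (s / INR (2 ^ K)) * (ps g (2 ^ K))^2
  <= a 0%nat * g 0%nat ^ 2 + 24 * s * ps (fun l => g l ^ 2) (2 ^ K).
Proof.
  pose proof s_nonneg as Hs0.
  induction K as [|K IH].
  - simpl. assert (0 <= s * g 0%nat ^2) by (apply Rmult_le_pos; auto; nra).
    replace (s / 1) with s by field. nra.
  - assert (E2 : (2 ^ S K = 2 ^ K + 2 ^ K)%nat) by (simpl; lia).
    rewrite E2. rewrite !ps_split.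
    set (n := (2 ^ K)%nat) in *.
    set (t := INR n).
    assert (Ht : 0 < t) by (unfold t, n; apply lt_0_INR; pose proof (pow2_pos K); lia).
    replace (INR (n + n)) with (2 * t) by (unfold t; rewrite plus_INR; ring).
    set (Q := ps (fun j => a j * ps g (S j) ^ 2) n) in *.
    set (P := ps g n) in *. set (E := ps (fun l => g l ^ 2) n) in *.
    set (d := rs g n n). set (e := rs (fun l => g l ^ 2) n n).
    set (Bk := rs (fun j => a j * ps g (S j) ^ 2) n n).
    set (Ak := rs a n n).
    assert (Hd : d ^ 2 <= t * e) by (unfold d, e, rs, t; apply CS_ps).
    assert (He : 0 <= e) by (unfold e, rs; apply ps_nonneg; intros; nra).
    assert (HP : 0 <= P) by (unfold P; apply ps_nonneg; auto).
    assert (Hd0 : 0 <= d) by (unfold d, rs; apply ps_nonneg; auto).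
    assert (HAk : t * Ak <= s).
    { eapply Rle_trans; [|apply (Hs K)]. fold n. unfold Ak, rs. rewrite <- ps_scal.
      apply ps_le. intros i Hi. apply Rmult_le_compat_r; [apply Ha|].
      unfold t. apply le_INR. lia. }
    assert (HBk : Bk <= Ak * (P + d) ^ 2).
    { unfold Bk, Ak, rs. rewrite Rmult_comm, <- ps_scal. apply ps_le. intros i Hi.
      rewrite Rmult_comm. apply Rmult_le_compat_r; [apply Ha|].
      assert (HG : 0 <= ps g (S (n + i)) <= P + d).
      { split; [apply ps_nonneg; auto|]. unfold P, d. rewrite <- ps_split.
        apply ps_mono; auto. lia. }
      nra. }
    assert (Hu : 0 <= s / t) by (apply Rmult_le_pos; [lra| left; apply Rinv_0_lt_compat; lra]).
    assert (HAk' : Ak <= s / t) by (apply (Rmult_le_reg_l t); [lra|]; field_simplify; lra).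
    assert (Hsq : 3 * (P + d)^2 - 4 * P^2 <= 12 * d^2) by (pose proof (pow2_ge_0 (P - 3 * d)); nra).
    assert (H3 : (s / t) * (3 * (P + d)^2 - 4 * P^2) <= (s/t) * (12 * (t * e))).
    { apply Rmult_le_compat_l; auto. lra. }
    replace ((s/t) * (12 * (t * e))) with (12 * s * e) in H3 by (field; lra).
    replace (s / (2 * t)) with ((s / t) / 2) by (field; lra).
    assert (HBk2 : Bk <= (s / t) * (P + d) ^ 2).
    { eapply Rle_trans; [exact HBk|]. apply Rmult_le_compat_r; [nra|auto]. }
    assert (0 <= s * e) by (apply Rmult_le_pos; auto).
    fold t in IH. set (u := s / t) in *. replace (4 * (u / 2)) with (2 * u) by field. lra.
Qed.

End Hardy.

Lemma hardy_real_gen (a g : nat -> R) (s : R) :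
  (forall n, 0 <= a n) -> (forall n, 0 <= g n) ->
  (forall k, rs (fun j => INR (j + 1) * a j) (2 ^ k) (2 ^ k) <= s) ->
  forall N, ps (fun j => a j * (ps g (S j))^2) N <= (a 0%nat + 24 * s) * ps (fun l => g l ^ 2) N.
Proof.
  intros Ha Hg Hs N.
  set (g' := fun l => if Nat.ltb l N then g l else 0).
  assert (Hg' : forall n, 0 <= g' n) by (intros; unfold g'; destruct (Nat.ltb n N); auto; lra).
  pose proof (hardy_dyadic a g' s Ha Hg' Hs N) as H.
  pose proof (s_nonneg a s Ha Hs) as Hs0.
  assert (E1 : ps (fun j => a j * (ps g (S j))^2) N = ps (fun j => a j * (ps g' (S j))^2) N).
  { apply ps_ext. intros n Hn. f_equal. f_equal. apply ps_ext. intros l Hl.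
    unfold g'. replace (Nat.ltb l N) with true; auto. symmetry; apply Nat.ltb_lt; lia. }
  assert (E2 : ps (fun l => g' l ^ 2) (2 ^ N) = ps (fun l => g l ^ 2) N).
  { pose proof (pow2_gt N). replace (2 ^ N)%nat with (N + (2 ^ N - N))%nat by lia.
    rewrite ps_split. unfold rs. rewrite (ps_ext (fun i => g' (N+i)%nat ^2) (fun _ => 0) (2^N - N)).
    - rewrite ps_zero, Rplus_0_r. apply ps_ext. intros l Hl. unfold g'.
      replace (Nat.ltb l N) with true; auto. symmetry; apply Nat.ltb_lt; lia.
    - intros i _. unfold g'. replace (Nat.ltb (N + i) N) with false. ring.
      symmetry; apply Nat.ltb_ge; lia. }
  assert (E3 : ps (fun j => a j * (ps g' (S j))^2) N <= ps (fun j => a j * (ps g' (S j))^2) (2 ^ N)).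
  { apply ps_mono. intros; apply Rmult_le_pos; auto. apply pow2_ge_0. pose proof (pow2_gt N); lia. }
  assert (E4 : 0 <= 4 * (s / INR (2 ^ N)) * ps g' (2 ^ N) ^ 2).
  { apply Rmult_le_pos; [|apply pow2_ge_0]. apply Rmult_le_pos; [lra|].
    apply Rmult_le_pos; auto. left; apply Rinv_0_lt_compat, lt_0_INR. pose proof (pow2_pos N); lia. }
  assert (E5 : a 0%nat * g' 0%nat ^ 2 <= a 0%nat * ps (fun l => g l ^ 2) N).
  { apply Rmult_le_compat_l; auto. destruct N as [|N'].
    - unfold g'. simpl. lra.
    - replace (g' 0%nat) with (g 0%nat) by reflexivity. apply Rle_trans with (ps (fun l => g l ^ 2) 1); [simpl; lra|].
      apply ps_mono; [intros; apply pow2_ge_0|lia]. }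
  rewrite E1. rewrite E2 in H. nra.
Qed.

Lemma block_rs (a : nat -> R) k :
  sum_n_m a (2 ^ k) (2 ^ S k - 1) = rs a (2 ^ k) (2 ^ k).
Proof.
  pose proof (pow2_pos k) as Hp.
  assert (E : (2 ^ k = S (2 ^ k - 1))%nat) by lia.
  rewrite E at 1. rewrite (@sum_n_m_sum_n R_AbelianGroup) by (simpl; lia).
  change (minus (sum_n a (2 ^ S k - 1)) (sum_n a (2 ^ k - 1)))
    with (sum_n a (2 ^ S k - 1) - sum_n a (2 ^ k - 1)).
  rewrite !sum_n_ps. replace (S (2 ^ S k - 1)) with (2 ^ k + 2 ^ k)%nat by (simpl; lia).
  rewrite <- E. rewrite ps_split. assert (HH : forall x y : R, x + y - x = y) by (intros; ring). apply HH.
Qed.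

Lemma sum_n_C_S (f : nat -> C) k : sum_n f (S k) = Cplus (sum_n f k) (f (S k)).
Proof. exact (@sum_Sn C_AbelianMonoid f k). Qed.

Lemma Cmod_sum_n (f : nat -> C) k : Cmod (sum_n f k) <= ps (fun l => Cmod (f l)) (S k).
Proof.
  induction k as [|k IH].
  - rewrite sum_O. simpl. lra.
  - rewrite sum_n_C_S. eapply Rle_trans; [apply Cmod_triangle|].
    change (ps (fun l => Cmod (f l)) (S (S k))) with (ps (fun l => Cmod (f l)) (S k) + Cmod (f (S k))).
    lra.
Qed.

Definition blk (beta : nat -> C) (k : nat) : R :=
  sum_n_m (fun j => INR (j + 1) * (Cmod (beta j))^2) (2 ^ k) (2 ^ (S k) - 1).

Lemma blk_nonneg beta k : 0 <= blk beta k.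
Proof.
  unfold blk. rewrite block_rs. unfold rs. apply ps_nonneg. intros.
  apply Rmult_le_pos; [apply pos_INR|apply pow2_ge_0].
Qed.

Lemma hardyC (beta f : nat -> C) (s : R) :
  (forall k, blk beta k <= s) ->
  forall N, ps (fun j => Cmod (rhaly beta f j) ^ 2) N
            <= (Cmod (beta 0%nat) ^ 2 + 24 * s) * ps (fun j => Cmod (f j) ^ 2) N.
Proof.
  intros Hs N.
  eapply Rle_trans; [|apply (hardy_real_gen (fun j => Cmod (beta j) ^ 2) (fun j => Cmod (f j)) s)].
  - apply ps_le. intros n _. unfold rhaly. rewrite Cmod_mult, Rpow_mult_distr.
    apply Rmult_le_compat_l; [apply pow2_ge_0|].
    pose proof (Cmod_sum_n f n). pose proof (Cmod_ge_0 (sum_n f n)).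
    apply pow_incr; lra.
  - intros; apply pow2_ge_0.
  - intros; apply Cmod_ge_0.
  - intros k. rewrite <- block_rs. apply Hs.
Qed.

Lemma l2_rhaly (beta f : nat -> C) (s : R) :
  (forall k, blk beta k <= s) -> l2 f ->
  l2 (rhaly beta f) /\
  Series (fun j => Cmod (rhaly beta f j) ^ 2)
    <= (Cmod (beta 0%nat) ^ 2 + 24 * s) * Series (fun j => Cmod (f j) ^ 2).
Proof.
  intros Hs Hf.
  assert (Hs0 : 0 <= s) by (eapply Rle_trans; [apply (blk_nonneg beta 0)|apply Hs]).
  apply bounded_ps_Series; [intros; apply pow2_ge_0|].
  intros N. eapply Rle_trans; [apply (hardyC beta f s Hs)|].
  apply Rmult_le_compat_l; [pose proof (pow2_ge_0 (Cmod (beta 0%nat))); lra|].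
  apply ps_le_Series; auto. intros; apply pow2_ge_0.
Qed.

Definition cvto (u : nat -> R) (l : R) :=
  forall eps, 0 < eps -> exists N, forall n, (N <= n)%nat -> Rabs (u n - l) < eps.

Lemma cvto_is_lim u l : cvto u l <-> is_lim_seq u l.
Proof.
  rewrite <- is_lim_seq_spec. split.
  - intros H eps. destruct (H eps (cond_pos eps)) as [N HN]. exists N; auto.
  - intros H eps Heps. destruct (H (mkposreal eps Heps)) as [N HN]. exists N; auto.
Qed.

Definition cvC (u : nat -> C) (l : C) :=
  forall eps, 0 < eps -> exists N, forall n, (N <= n)%nat -> Cmod (Cminus (u n) l) < eps.

Definition incr (psi : nat -> nat) := forall n, (psi n < psi (S n))%nat.

Lemma incr_lt psi : incr psi -> forall a b, (a < b)%nat -> (psi a < psi b)%nat.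
Proof.
  intros H a b Hab. induction Hab; [apply H|]. specialize (H m). lia.
Qed.

Lemma incr_ge psi : incr psi -> forall n, (n <= psi n)%nat.
Proof. intros H n; induction n; [lia|]. specialize (H n); lia. Qed.

Lemma incr_comp f g : incr f -> incr g -> incr (fun n => f (g n)).
Proof. intros Hf Hg n. apply incr_lt; auto. Qed.

Fixpoint iter_ch (ch : nat -> nat -> nat) (i : nat) : nat :=
  match i with O => ch O O | S i => ch (S i) (S (iter_ch ch i)) end.

Lemma extract (P : nat -> nat -> Prop) :
  (forall i N, exists p, (N <= p)%nat /\ P i p) ->
  exists psi, incr psi /\ forall i, P i (psi i).
Proof.
  intros H.
  set (ch := fun i N => proj1_sig (constructive_indefinite_description _ (H i N))).
  assert (Hch : forall i N, (N <= ch i N)%nat /\ P i (ch i N)).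
  { intros i N. unfold ch. destruct (constructive_indefinite_description _ (H i N)); auto. }
  exists (iter_ch ch). split.
  - intros n. simpl. destruct (Hch (S n) (S (iter_ch ch n))). lia.
  - intros [|i]; simpl; apply Hch.
Qed.

Lemma small_inv eps : 0 < eps -> exists N, / (INR N + 1) < eps.
Proof.
  intros He. destruct (archimed (/ eps)) as [H1 _].
  assert (Hp : 0 < / eps) by (apply Rinv_0_lt_compat; auto).
  assert (Hz : (0 < up (/ eps))%Z) by (apply lt_IZR; lra).
  exists (Z.to_nat (up (/ eps))).
  rewrite INR_IZR_INZ, Z2Nat.id by lia.
  apply (Rmult_lt_reg_l (IZR (up (/ eps)) + 1)); [lra|].
  rewrite Rinv_r by lra.
  assert (eps * / eps = 1) by (field; lra).
  nra.
Qed.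

Lemma inv_mono n m : (n <= m)%nat -> / (INR m + 1) <= / (INR n + 1).
Proof.
  intros H. apply Rinv_le_contravar. pose proof (pos_INR n); lra.
  apply le_INR in H; lra.
Qed.

Lemma BW_R (u : nat -> R) B : (forall n, Rabs (u n) <= B) ->
  exists psi, incr psi /\ exists l, cvto (fun n => u (psi n)) l.
Proof.
  intros HB.
  destruct (Bolzano_Weierstrass u (fun c => -B <= c <= B) (compact_P3 (-B) B)) as [l Hl].
  { intros n. specialize (HB n). apply Rabs_le_between in HB. lra. }
  destruct (extract (fun i p => Rabs (u p - l) < / (INR i + 1))) as [psi [Hpsi HP]].
  { intros i N.
    assert (Hpos : 0 < / (INR i + 1)) by (apply Rinv_0_lt_compat; pose proof (pos_INR i); lra).
    destruct (Hl (disc l (mkposreal _ Hpos)) N) as [p [Hp1 Hp2]].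
    - exists (mkposreal _ Hpos). intros y Hy; exact Hy.
    - exists p; split; auto. }
  exists psi; split; auto. exists l.
  intros eps Heps. destruct (small_inv eps Heps) as [N HN]. exists N. intros n Hn.
  specialize (HP n). pose proof (inv_mono _ _ Hn). lra.
Qed.

Lemma Rabs_fst_Cmod (z : C) : Rabs (fst z) <= Cmod z.
Proof.
  unfold Cmod. rewrite <- sqrt_Rsqr_abs. apply sqrt_le_1_alt. unfold Rsqr.
  pose proof (pow2_ge_0 (snd z)). simpl. nra.
Qed.

Lemma Rabs_snd_Cmod (z : C) : Rabs (snd z) <= Cmod z.
Proof.
  unfold Cmod. rewrite <- sqrt_Rsqr_abs. apply sqrt_le_1_alt. unfold Rsqr.
  pose proof (pow2_ge_0 (fst z)). simpl. nra.
Qed.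

Lemma Cmod_le_fst_snd (z : C) : Cmod z <= Rabs (fst z) + Rabs (snd z).
Proof.
  unfold Cmod. rewrite <- (sqrt_pow2 (Rabs (fst z) + Rabs (snd z))).
  - apply sqrt_le_1_alt.
    pose proof (Rabs_pos (fst z)). pose proof (Rabs_pos (snd z)).
    assert (fst z ^ 2 = Rabs (fst z) ^ 2) by (symmetry; apply pow2_abs).
    assert (snd z ^ 2 = Rabs (snd z) ^ 2) by (symmetry; apply pow2_abs).
    nra.
  - pose proof (Rabs_pos (fst z)). pose proof (Rabs_pos (snd z)). lra.
Qed.

Lemma cvto_sub u l psi : cvto u l -> incr psi -> cvto (fun n => u (psi n)) l.
Proof.
  intros H Hp eps He. destruct (H eps He) as [N HN]. exists N. intros n Hn.
  apply HN. pose proof (incr_ge psi Hp n). lia.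
Qed.

Lemma BW_C (u : nat -> C) B : (forall n, Cmod (u n) <= B) ->
  exists psi, incr psi /\ exists l, cvC (fun n => u (psi n)) l.
Proof.
  intros HB.
  destruct (BW_R (fun n => fst (u n)) B) as [p1 [Hp1 [l1 Hl1]]].
  { intros n. eapply Rle_trans; [apply Rabs_fst_Cmod|auto]. }
  destruct (BW_R (fun n => snd (u (p1 n))) B) as [p2 [Hp2 [l2 Hl2]]].
  { intros n. eapply Rle_trans; [apply Rabs_snd_Cmod|auto]. }
  exists (fun n => p1 (p2 n)). split; [apply incr_comp; auto|].
  exists (l1, l2). intros eps He.
  pose proof (cvto_sub _ _ _ Hl1 Hp2) as H1.
  destruct (H1 (eps/2) ltac:(lra)) as [N1 HN1].
  destruct (Hl2 (eps/2) ltac:(lra)) as [N2 HN2].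
  exists (max N1 N2). intros n Hn.
  eapply Rle_lt_trans; [apply Cmod_le_fst_snd|].
  specialize (HN1 n ltac:(lia)). specialize (HN2 n ltac:(lia)).
  simpl in *. unfold Rminus in *. lra.
Qed.

Definition Ext (u : nat -> C) : nat -> nat :=
  epsilon (inhabits (fun n : nat => n))
          (fun psi => incr psi /\ exists l, cvC (fun n => u (psi n)) l).

Lemma Ext_spec u B : (forall n, Cmod (u n) <= B) ->
  incr (Ext u) /\ exists l, cvC (fun n => u (Ext u n)) l.
Proof.
  intros HB. unfold Ext. apply epsilon_spec. apply (BW_C u B HB).
Qed.

Fixpoint Psi (x : nat -> nat -> C) (j : nat) : nat -> nat :=
  match j with
  | O => Ext (fun n => x n O)
  | S j' => fun n => Psi x j' (Ext (fun m => x (Psi x j' m) (S j')) n)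
  end.

Lemma Psi_spec x B : (forall n j, Cmod (x n j) <= B) ->
  forall j, incr (Psi x j) /\ exists l, cvC (fun n => x (Psi x j n) j) l.
Proof.
  intros HB j. induction j as [|j [IH1 IH2]].
  - simpl. apply (Ext_spec (fun n => x n 0%nat) B). intros; apply HB.
  - simpl. destruct (Ext_spec (fun m => x (Psi x j m) (S j)) B) as [H1 H2]; [intros; apply HB|].
    split; [apply incr_comp; auto|exact H2].
Qed.

Lemma Psi_nest x B : (forall n j, Cmod (x n j) <= B) ->
  forall j d, exists rho, incr rho /\ forall m, Psi x (d + j) m = Psi x j (rho m).
Proof.
  intros HB j d. induction d as [|d [rho [Hr Hm]]].
  - exists (fun m => m). split; [intros n; lia|reflexivity].
  - destruct (Ext_spec (fun m => x (Psi x (d + j) m) (S (d + j))) B) as [H1 _]; [intros; apply HB|].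
    exists (fun m => rho (Ext (fun m => x (Psi x (d + j) m) (S (d + j))) m)).
    split; [apply incr_comp; auto|].
    intros m. simpl. apply Hm.
Qed.

Lemma diag (x : nat -> nat -> C) B : (forall n j, Cmod (x n j) <= B) ->
  exists phi, incr phi /\ exists w, forall j, cvC (fun n => x (phi n) j) (w j).
Proof.
  intros HB.
  exists (fun n => Psi x n n). split.
  - intros n. simpl.
    destruct (Ext_spec (fun m => x (Psi x n m) (S n)) B) as [H1 _]; [intros; apply HB|].
    destruct (Psi_spec x B HB n) as [H2 _].
    apply incr_lt; auto. pose proof (incr_ge _ H1 (S n)). lia.
  - exists (fun j => epsilon (inhabits (RtoC 0)) (fun l => cvC (fun n => x (Psi x j n) j) l)).
    intros j.
    destruct (Psi_spec x B HB j) as [Hinc Hex].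
    pose proof (epsilon_spec (inhabits (RtoC 0)) (fun l => cvC (fun n => x (Psi x j n) j) l) Hex) as Hl.
    simpl in Hl. set (l := epsilon _ _) in *.
    intros eps He. destruct (Hl eps He) as [N HN].
    exists (max N j). intros n Hn.
    destruct (Psi_nest x B HB j (n - j)) as [rho [Hr Hm]].
    replace (Psi x n n) with (Psi x j (rho n)).
    + apply HN. pose proof (incr_ge _ Hr n). lia.
    + symmetry. replace (Psi x n) with (Psi x (n - j + j)) by (f_equal; lia). apply Hm.
Qed.

Lemma ps_is_lim (v : nat -> nat -> R) (c : nat -> R) :
  (forall l, is_lim_seq (fun n => v n l) (c l)) ->
  forall N, is_lim_seq (fun n => ps (v n) N) (ps c N).
Proof.
  intros H N. induction N as [|N IH].
  - simpl. apply is_lim_seq_const.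
  - simpl. apply is_lim_seq_plus'; auto.
Qed.

Lemma is_lim_le_const u (l : R) B : is_lim_seq u l -> (forall n, u n <= B) -> l <= B.
Proof.
  intros Hl HB. pose proof (is_lim_seq_le _ _ _ _ HB Hl (is_lim_seq_const B)). simpl in H. exact H.
Qed.

Lemma Cmod_minus_le (a b : C) : Rabs (Cmod a - Cmod b) <= Cmod (Cminus a b).
Proof.
  apply Rabs_le. split.
  - pose proof (Cmod_triangle a (Cminus b a)).
    replace (Cplus a (Cminus b a)) with b in H by ring.
    assert (Cmod (Cminus a b) = Cmod (Cminus b a)).
    { rewrite <- Cmod_opp. f_equal. unfold Cminus. ring. }
    lra.
  - pose proof (Cmod_triangle b (Cminus a b)).
    replace (Cplus b (Cminus a b)) with a in H by ring. lra.
Qed.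

Lemma cvC_Cmod2 (u : nat -> C) l : cvC u l ->
  is_lim_seq (fun n => Cmod (u n) ^ 2) (Cmod l ^ 2).
Proof.
  intros H.
  assert (H1 : is_lim_seq (fun n => Cmod (u n)) (Cmod l)).
  { apply cvto_is_lim. intros eps He. destruct (H eps He) as [N HN]. exists N. intros n Hn.
    eapply Rle_lt_trans; [apply Cmod_minus_le|auto]. }
  apply (is_lim_seq_ext (fun n => Cmod (u n) * (Cmod (u n) * 1))). { intros; simpl; ring. }
  replace (Cmod l ^ 2) with (Cmod l * (Cmod l * 1)) by ring.
  apply is_lim_seq_mult'; auto. apply is_lim_seq_mult'; auto. apply is_lim_seq_const.
Qed.

Lemma sum_n_Cminus (a b : nat -> C) j :
  sum_n (fun l => Cminus (a l) (b l)) j = Cminus (sum_n a j) (sum_n b j).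
Proof.
  induction j as [|j IH].
  - rewrite !sum_O. reflexivity.
  - rewrite !sum_n_C_S, IH.
    assert (HH : forall x y z w : C, Cplus (Cminus x y) (Cminus z w) = Cminus (Cplus x z) (Cplus y w)) by (intros; ring).
    apply HH.
Qed.

Lemma ps_trunc (a : nat -> R) m : (forall j, (m <= j)%nat -> a j = 0) -> (forall j, 0 <= a j) ->
  forall N, ps a N <= ps a m.
Proof.
  intros Hz Hp N. destruct (Compare_dec.le_lt_dec N m) as [H|H].
  - apply ps_mono; auto.
  - replace N with (m + (N - m))%nat by lia. rewrite ps_split. unfold rs.
    rewrite (ps_ext (fun i => a (m + i)%nat) (fun _ => 0) (N - m)); [rewrite ps_zero; lra|].
    intros i _. apply Hz. lia.
Qed.

Lemma sigma_blk alpha k : rhaly_sigma alpha k = sqrt (blk alpha k).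
Proof. reflexivity. Qed.

Lemma Cmod_diff_sq (a b : C) : Cmod (Cminus a b) ^ 2 <= 2 * Cmod a ^ 2 + 2 * Cmod b ^ 2.
Proof.
  unfold Cminus. pose proof (Cmod_triangle a (Copp b)). rewrite Cmod_opp in H.
  pose proof (Cmod_ge_0 (Cplus a (Copp b))). pose proof (Cmod_ge_0 a). pose proof (Cmod_ge_0 b).
  assert (Cmod (Cplus a (Copp b)) ^ 2 <= (Cmod a + Cmod b) ^ 2) by (apply pow_incr; lra).
  pose proof (pow2_ge_0 (Cmod a - Cmod b)). nra.
Qed.

Lemma blk_lt_of_sigma alpha k d : 0 <= d -> Rabs (rhaly_sigma alpha k - 0) < sqrt d -> blk alpha k < d.
Proof.
  intros Hd H. rewrite sigma_blk, Rminus_0_r in H.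
  rewrite Rabs_right in H by (apply Rle_ge, sqrt_pos).
  pose proof (blk_nonneg alpha k).
  rewrite <- (sqrt_sqrt (blk alpha k)) by auto. rewrite <- (sqrt_sqrt d) by auto.
  pose proof (sqrt_pos (blk alpha k)). nra.
Qed.

Lemma blk_bound_of_sigma alpha : is_lim_seq (rhaly_sigma alpha) 0 -> exists s, forall k, blk alpha k <= s.
Proof.
  intros H. apply cvto_is_lim in H. destruct (H 1 Rlt_0_1) as [N HN].
  exists (ps (blk alpha) N + 1). intros k.
  pose proof (ps_nonneg (blk alpha) N (blk_nonneg alpha)).
  destruct (Compare_dec.le_lt_dec N k) as [Hk|Hk].
  - specialize (HN k Hk). rewrite <- sqrt_1 in HN. apply blk_lt_of_sigma in HN; lra.
  - assert (blk alpha k <= ps (blk alpha) N).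
    { apply Rle_trans with (ps (blk alpha) (S k)).
      - simpl. pose proof (ps_nonneg (blk alpha) k (blk_nonneg alpha)). lra.
      - apply ps_mono; [apply blk_nonneg|lia]. }
    lra.
Qed.

Lemma blk_small alpha : is_lim_seq (rhaly_sigma alpha) 0 ->
  forall d, 0 < d -> exists K, forall k, (K <= k)%nat -> blk alpha k <= d.
Proof.
  intros H d Hd. apply cvto_is_lim in H. destruct (H (sqrt d) (sqrt_lt_R0 _ Hd)) as [K HK].
  exists K. intros k Hk. left. apply blk_lt_of_sigma; [lra|]. apply HK; auto.
Qed.

Lemma backward alpha : is_lim_seq (rhaly_sigma alpha) 0 -> compact_l2_op (rhaly alpha).
Proof.
  intros Hsig. destruct (blk_bound_of_sigma alpha Hsig) as [s Hs].
  split.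
  { intros f Hf. apply (l2_rhaly alpha f s Hs Hf). }
  intros F HF [M HM].
  assert (HM0 : 0 <= M) by (eapply Rle_trans; [apply sqrt_pos|apply (HM 0%nat)]).
  assert (HSer : forall n, Series (fun j => Cmod (F n j) ^ 2) <= M ^ 2).
  { intros n. specialize (HM n). unfold l2norm in HM.
    assert (H0 : 0 <= Series (fun j => Cmod (F n j) ^ 2)).
    { apply Rle_trans with (ps (fun j => Cmod (F n j) ^ 2) 0); [simpl; lra|].
      apply ps_le_Series; [intros; apply pow2_ge_0|apply HF]. }
    rewrite <- (sqrt_sqrt (Series _)) by auto.
    pose proof (sqrt_pos (Series (fun j => Cmod (F n j) ^ 2))). nra. }
  assert (Hps : forall n N, ps (fun j => Cmod (F n j) ^ 2) N <= M ^ 2).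
  { intros n N. eapply Rle_trans; [apply ps_le_Series|apply HSer]; [intros; apply pow2_ge_0|apply HF]. }
  assert (Hco : forall n j, Cmod (F n j) <= M).
  { intros n j. specialize (Hps n (S j)).
    assert (Cmod (F n j) ^ 2 <= M ^ 2).
    { eapply Rle_trans; [|exact Hps].
      pose proof (ps_nonneg (fun j => Cmod (F n j) ^ 2) j (fun _ => pow2_ge_0 _)).
      apply Rle_trans with (ps (fun j => Cmod (F n j) ^ 2) j + Cmod (F n j) ^ 2); [lra|right; reflexivity]. }
    pose proof (Cmod_ge_0 (F n j)). nra. }
  destruct (diag F M Hco) as [phi [Hphi [w Hw]]].
  assert (Hwps : forall N, ps (fun j => Cmod (w j) ^ 2) N <= M ^ 2).
  { intros N. apply (is_lim_le_const (fun n => ps (fun j => Cmod (F (phi n) j) ^ 2) N)).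
    - apply (ps_is_lim (fun n j => Cmod (F (phi n) j) ^ 2)). intros l. apply cvC_Cmod2. apply Hw.
    - intros n. apply Hps. }
  destruct (bounded_ps_Series _ _ (fun j => pow2_ge_0 (Cmod (w j))) Hwps) as [Hlw _].
  exists phi, (rhaly alpha w). split; [|split].
  - intros n m Hnm. apply incr_lt; auto.
  - apply (l2_rhaly alpha w s Hs Hlw).
  - set (D := fun n l => Cminus (F (phi n) l) (w l)).
    apply (is_lim_seq_ext (fun n => l2norm (rhaly alpha (D n)))).
    { intros n. unfold l2norm. f_equal. apply Series_ext. intros j. f_equal. f_equal.
      unfold rhaly, D. rewrite sum_n_Cminus. ring. }
    apply cvto_is_lim. intros eps Heps.
    set (c := 96 * M ^ 2 + 1).
    assert (Hc : 0 < c) by (unfold c; pose proof (pow2_ge_0 M); lra).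
    assert (He2 : 0 < eps ^ 2) by (apply pow_lt; lra).
    set (delta := eps ^ 2 / (2 * c)).
    assert (Hdel : 0 < delta) by (unfold delta; apply Rdiv_lt_0_compat; lra).
    destruct (blk_small alpha Hsig delta Hdel) as [K HK].
    set (beta := fun j => if Nat.leb (2 ^ K) j then alpha j else RtoC 0).
    assert (Hbeta : forall k, blk beta k <= delta).
    { intros k. unfold blk. rewrite block_rs. destruct (Compare_dec.le_lt_dec K k) as [Hk|Hk].
      - eapply Rle_trans; [|apply (HK k Hk)]. unfold blk. rewrite block_rs. unfold rs. apply ps_le.
        intros i _. apply Rmult_le_compat_l; [apply pos_INR|].
        unfold beta. destruct (Nat.leb _ _); [lra|].
        rewrite Cmod_R, Rabs_R0. pose proof (pow2_ge_0 (Cmod (alpha (2 ^ k + i)%nat))). simpl. lra.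
      - unfold rs. rewrite (ps_ext _ (fun _ => 0)). { rewrite ps_zero; lra. }
        intros i Hi. unfold beta. replace (Nat.leb (2 ^ K) (2 ^ k + i)) with false.
        { rewrite Cmod_R, Rabs_R0. simpl; ring. }
        symmetry. apply Nat.leb_gt.
        assert (HH : (2 ^ S k <= 2 ^ K)%nat) by (apply Nat.pow_le_mono_r; lia).
        simpl in HH. lia. }
    assert (Hb0 : Cmod (beta 0%nat) = 0).
    { unfold beta. replace (Nat.leb (2 ^ K) 0) with false.
      - rewrite Cmod_R; apply Rabs_R0.
      - symmetry. apply Nat.leb_gt. pose proof (pow2_pos K). lia. }
    assert (HD : forall n N, ps (fun l => Cmod (D n l) ^ 2) N <= 4 * M ^ 2).
    { intros n N. apply Rle_trans with (ps (fun l => 2 * Cmod (F (phi n) l) ^ 2 + 2 * Cmod (w l) ^ 2) N).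
      - apply ps_le. intros; apply Cmod_diff_sq.
      - rewrite ps_plus, !ps_scal. specialize (Hps (phi n) N). specialize (Hwps N). lra. }
    assert (Htail : forall n N, ps (fun j => Cmod (rhaly beta (D n) j) ^ 2) N <= 96 * delta * M ^ 2).
    { intros n N. eapply Rle_trans; [apply (hardyC beta (D n) delta Hbeta)|]. rewrite Hb0.
      specialize (HD n N). replace (0 ^ 2 + 24 * delta) with (24 * delta) by ring. nra. }
    set (A := fun n => ps (fun j => Cmod (rhaly alpha (D n) j) ^ 2) (2 ^ K)).
    assert (Hsplit : forall n N, ps (fun j => Cmod (rhaly alpha (D n) j) ^ 2) N <= A n + 96 * delta * M ^ 2).
    { intros n N.
      apply Rle_trans with (ps (fun j => (if Nat.ltb j (2 ^ K) then Cmod (rhaly alpha (D n) j) ^ 2 else 0) + Cmod (rhaly beta (D n) j) ^ 2) N).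
      - apply ps_le. intros j _. destruct (Nat.ltb j (2 ^ K)) eqn:E.
        + pose proof (pow2_ge_0 (Cmod (rhaly beta (D n) j))). lra.
        + assert (HE : rhaly beta (D n) j = rhaly alpha (D n) j).
          { unfold rhaly, beta. replace (Nat.leb (2 ^ K) j) with true; auto.
            symmetry. apply Nat.leb_le. apply Nat.ltb_ge in E. lia. }
          rewrite HE. lra.
      - rewrite ps_plus. specialize (Htail n N).
        assert (ps (fun j => if Nat.ltb j (2 ^ K) then Cmod (rhaly alpha (D n) j) ^ 2 else 0) N <= A n).
        { eapply Rle_trans; [apply (ps_trunc _ (2 ^ K))|].
          - intros j Hj. replace (Nat.ltb j (2 ^ K)) with false; auto. symmetry; apply Nat.ltb_ge; lia.
          - intros j. destruct (Nat.ltb j (2 ^ K)); [apply pow2_ge_0|lra].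
          - unfold A. right. apply ps_ext. intros j Hj. replace (Nat.ltb j (2 ^ K)) with true; auto.
            symmetry; apply Nat.ltb_lt; lia. }
        lra. }
    assert (HA : is_lim_seq A 0).
    { apply is_lim_seq_le_le with (u := fun _ => 0)
        (w := fun n => ps (fun j => Cmod (alpha j) ^ 2 * (ps (fun l => Cmod (D n l)) (S j)) ^ 2) (2 ^ K)).
      - intros n. split.
        + apply ps_nonneg. intros; apply pow2_ge_0.
        + apply ps_le. intros j _. unfold rhaly. rewrite Cmod_mult, Rpow_mult_distr.
          apply Rmult_le_compat_l; [apply pow2_ge_0|].
          pose proof (Cmod_sum_n (D n) j). pose proof (Cmod_ge_0 (sum_n (D n) j)). apply pow_incr; lra.
      - apply is_lim_seq_const.
      - assert (HL : is_lim_seq (fun n => ps (fun j => Cmod (alpha j) ^ 2 * (ps (fun l => Cmod (D n l)) (S j)) ^ 2) (2 ^ K)) (ps (fun _ => 0) (2 ^ K))).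
        { apply (ps_is_lim (fun n j => Cmod (alpha j) ^ 2 * (ps (fun l => Cmod (D n l)) (S j)) ^ 2) (fun _ => 0)).
          intros j.
          assert (H0 : is_lim_seq (fun n => ps (fun l => Cmod (D n l)) (S j)) 0).
          { assert (H1 : is_lim_seq (fun n => ps (fun l => Cmod (D n l)) (S j)) (ps (fun _ => 0) (S j))).
            { apply (ps_is_lim (fun n l => Cmod (D n l)) (fun _ => 0)). intros l. apply cvto_is_lim.
              intros e He. destruct (Hw l e He) as [N HN]. exists N. intros n Hn.
              rewrite Rminus_0_r, Rabs_right by (apply Rle_ge, Cmod_ge_0). apply HN; auto. }
            rewrite ps_zero in H1. exact H1. }
          pose proof (is_lim_seq_mult' _ _ _ _ (is_lim_seq_const (Cmod (alpha j) ^ 2)) (is_lim_seq_mult' _ _ _ _ H0 H0)) as H2.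
          replace (Cmod (alpha j) ^ 2 * (0 * 0)) with 0 in H2 by ring.
          eapply is_lim_seq_ext; [|exact H2]. intros; simpl; ring. }
        rewrite ps_zero in HL. exact HL. }
    apply cvto_is_lim in HA. destruct (HA (eps ^ 2 / 2)) as [N0 HN0]; [lra|].
    exists N0. intros n Hn. specialize (HN0 n Hn). rewrite Rminus_0_r in HN0.
    assert (HA0 : 0 <= A n) by (apply ps_nonneg; intros; apply pow2_ge_0).
    rewrite Rabs_right in HN0 by lra.
    destruct (bounded_ps_Series _ _ (fun j => pow2_ge_0 _) (Hsplit n)) as [_ HS].
    assert (Hdm : 96 * delta * M ^ 2 <= eps ^ 2 / 2).
    { unfold delta. replace (96 * (eps ^ 2 / (2 * c)) * M ^ 2) with ((eps ^ 2 / 2) * (96 * M ^ 2 / c)) by (field; lra).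
      assert (Hq : 96 * M ^ 2 / c <= 1).
      { apply (Rmult_le_reg_r c); [lra|]. unfold Rdiv. rewrite Rmult_assoc, Rinv_l by lra. unfold c. lra. }
      assert (0 <= 96 * M ^ 2 / c) by (apply Rmult_le_pos; [pose proof (pow2_ge_0 M); lra|left; apply Rinv_0_lt_compat; lra]).
      nra. }
    rewrite Rminus_0_r, Rabs_right by (apply Rle_ge, sqrt_pos). unfold l2norm.
    apply Rlt_le_trans with (sqrt (eps ^ 2)); [|rewrite sqrt_pow2; lra].
    destruct (Rle_or_lt 0 (Series (fun j => Cmod (rhaly alpha (D n) j) ^ 2))) as [Hp|Hp].
    + apply sqrt_lt_1_alt. lra.
    + rewrite sqrt_neg_0 by lra. apply sqrt_lt_R0. lra.
Qed.

Definition tc (k : nat) : R := / sqrt (INR (2 ^ k)).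
Definition tv (k l : nat) : R := if Nat.ltb l (2 ^ k) then tc k else 0.
Definition T (k : nat) : nat -> C := fun l => RtoC (tv k l).

Lemma t_pos k : 0 < INR (2 ^ k).
Proof. apply lt_0_INR. pose proof (pow2_pos k). lia. Qed.

Lemma tc_pos k : 0 < tc k.
Proof. unfold tc. apply Rinv_0_lt_compat, sqrt_lt_R0, t_pos. Qed.

Lemma tc_sq k : tc k ^ 2 = / INR (2 ^ k).
Proof.
  unfold tc. pose proof (t_pos k). pose proof (sqrt_lt_R0 _ H).
  replace ((/ sqrt (INR (2 ^ k))) ^ 2) with (/ (sqrt (INR (2 ^ k)) ^ 2)) by (field; lra).
  rewrite pow2_sqrt; lra.
Qed.

Lemma ps_ind m c N : ps (fun l => if Nat.ltb l m then c else 0) N = INR (Nat.min N m) * c.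
Proof.
  induction N as [|N IH]; [simpl; ring|].
  simpl ps. rewrite IH. destruct (Nat.ltb N m) eqn:E.
  - apply Nat.ltb_lt in E. rewrite Nat.min_l by lia. rewrite Nat.min_l by lia. rewrite S_INR. ring.
  - apply Nat.ltb_ge in E. rewrite !Nat.min_r by lia. ring.
Qed.

Lemma sum_n_RtoC (h : nat -> R) j : sum_n (fun l => RtoC (h l)) j = RtoC (ps h (S j)).
Proof.
  induction j as [|j IH].
  - rewrite sum_O. simpl. f_equal. ring.
  - rewrite sum_n_C_S, IH, <- RtoC_plus. reflexivity.
Qed.

Lemma rhaly_T_sq alpha k j :
  Cmod (rhaly alpha (T k) j) ^ 2 = Cmod (alpha j) ^ 2 * INR (Nat.min (S j) (2 ^ k)) ^ 2 / INR (2 ^ k).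
Proof.
  unfold rhaly, T. rewrite sum_n_RtoC. unfold tv. rewrite ps_ind.
  rewrite Cmod_mult, Cmod_R, Rabs_right.
  - rewrite !Rpow_mult_distr, tc_sq. unfold Rdiv. ring.
  - apply Rle_ge, Rmult_le_pos; [apply pos_INR|left; apply tc_pos].
Qed.

Lemma T_sq k l : Cmod (T k l) ^ 2 = if Nat.ltb l (2 ^ k) then / INR (2 ^ k) else 0.
Proof.
  unfold T, tv. rewrite Cmod_R. destruct (Nat.ltb l (2 ^ k)).
  - rewrite Rabs_right by (left; apply tc_pos). apply tc_sq.
  - rewrite Rabs_R0. ring.
Qed.

Lemma T_l2 k : l2 (T k) /\ Series (fun l => Cmod (T k l) ^ 2) <= 1.
Proof.
  apply bounded_ps_Series; [intros; apply pow2_ge_0|]. intros N.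
  rewrite (ps_ext _ (fun l => if Nat.ltb l (2 ^ k) then / INR (2 ^ k) else 0)) by (intros; apply T_sq).
  rewrite ps_ind. pose proof (t_pos k).
  apply Rle_trans with (INR (2 ^ k) * / INR (2 ^ k)).
  - apply Rmult_le_compat_r; [left; apply Rinv_0_lt_compat; auto|]. apply le_INR. lia.
  - rewrite Rinv_r; lra.
Qed.

Lemma l2_minus (a b : nat -> C) : l2 a -> l2 b -> l2 (fun j => Cminus (a j) (b j)).
Proof.
  intros Ha Hb. unfold l2.
  refine (proj1 (bounded_ps_Series _ (2 * Series (fun j => Cmod (a j) ^ 2) + 2 * Series (fun j => Cmod (b j) ^ 2))
    (fun j => pow2_ge_0 _) _)).
  intros N. apply Rle_trans with (ps (fun l => 2 * Cmod (a l) ^ 2 + 2 * Cmod (b l) ^ 2) N).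
  - apply ps_le. intros; apply Cmod_diff_sq.
  - rewrite ps_plus, !ps_scal.
    pose proof (ps_le_Series (fun j => Cmod (a j) ^ 2) (fun _ => pow2_ge_0 _) Ha N).
    pose proof (ps_le_Series (fun j => Cmod (b j) ^ 2) (fun _ => pow2_ge_0 _) Hb N). lra.
Qed.

Lemma term_le_l2norm (f : nat -> C) j : l2 f -> Cmod (f j) <= l2norm f.
Proof.
  intros Hf. unfold l2norm. rewrite <- (sqrt_pow2 (Cmod (f j))) by apply Cmod_ge_0.
  apply sqrt_le_1_alt.
  apply Rle_trans with (ps (fun j => Cmod (f j) ^ 2) (S j)).
  - pose proof (ps_nonneg (fun j => Cmod (f j) ^ 2) j (fun _ => pow2_ge_0 _)).
    apply Rle_trans with (ps (fun j => Cmod (f j) ^ 2) j + Cmod (f j) ^ 2); [lra|right; reflexivity].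
  - apply ps_le_Series; auto. intros; apply pow2_ge_0.
Qed.

Lemma Series_nonneg (a : nat -> R) : (forall n, 0 <= a n) -> ex_series a -> 0 <= Series a.
Proof. intros H1 H2. apply Rle_trans with (ps a 0); [simpl; lra|]. apply ps_le_Series; auto. Qed.

Lemma blk_le_T alpha k : l2 (rhaly alpha (T k)) ->
  blk alpha k <= 2 * Series (fun j => Cmod (rhaly alpha (T k) j) ^ 2).
Proof.
  intros Hl. unfold blk. rewrite block_rs.
  pose proof (t_pos k) as Ht. set (t := INR (2 ^ k)) in *.
  apply Rle_trans with (2 * rs (fun j => Cmod (rhaly alpha (T k) j) ^ 2) (2 ^ k) (2 ^ k)).
  - unfold rs. rewrite <- ps_scal. apply ps_le. intros i Hi.
    rewrite rhaly_T_sq. rewrite Nat.min_r by lia. fold t.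
    set (A := Cmod (alpha (2 ^ k + i)%nat) ^ 2).
    assert (HA : 0 <= A) by apply pow2_ge_0.
    replace (A * t ^ 2 / t) with (t * A) by (field; lra).
    assert (HI : INR (2 ^ k + i + 1) <= 2 * t).
    { replace (2 * t) with (INR (2 * 2 ^ k)) by (rewrite mult_INR; unfold t; simpl; ring).
      apply le_INR; lia. }
    nra.
  - apply Rmult_le_compat_l; [lra|].
    pose proof (ps_split (fun j => Cmod (rhaly alpha (T k) j) ^ 2) (2 ^ k) (2 ^ k)).
    pose proof (ps_nonneg (fun j => Cmod (rhaly alpha (T k) j) ^ 2) (2 ^ k) (fun _ => pow2_ge_0 _)).
    pose proof (ps_le_Series (fun j => Cmod (rhaly alpha (T k) j) ^ 2) (fun _ => pow2_ge_0 _) Hl (2 ^ k + 2 ^ k)).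
    lra.
Qed.

Lemma forward alpha : compact_l2_op (rhaly alpha) -> is_lim_seq (rhaly_sigma alpha) 0.
Proof.
  intros [H1 H2]. apply cvto_is_lim. intros eps Heps. apply NNPP. intros Hnot.
  assert (Hinf : forall (i N : nat), exists p, (N <= p)%nat /\ eps ^ 2 <= blk alpha p).
  { intros i N. apply NNPP. intros Hn. apply Hnot. exists N. intros n Hn'.
    apply Rnot_le_lt. intros Hle. apply Hn. exists n. split; auto.
    rewrite Rminus_0_r, sigma_blk, Rabs_right in Hle by (apply Rle_ge, sqrt_pos).
    pose proof (blk_nonneg alpha n).
    assert (eps ^ 2 <= sqrt (blk alpha n) ^ 2) by (apply pow_incr; lra).
    rewrite pow2_sqrt in H0 by auto. exact H0. }
  destruct (extract (fun _ p => eps ^ 2 <= blk alpha p) Hinf) as [psi [Hpsi HP]].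
  set (F := fun i => T (psi i)).
  destruct (H2 F) as [phi [g [Hphi [Hg Hlim]]]].
  { intros n. apply T_l2. }
  { exists 1. intros n. unfold l2norm. rewrite <- sqrt_1. apply sqrt_le_1_alt. apply T_l2. }
  assert (HRF : forall n, l2 (rhaly alpha (F n))) by (intros; apply H1; apply T_l2).
  assert (Hphi' : incr phi) by (intros n; apply Hphi; lia).
  assert (Hg0 : forall j, Cmod (g j) = 0).
  { intros j. pose proof (Cmod_ge_0 (g j)). destruct (Rle_lt_or_eq_dec 0 (Cmod (g j)) H) as [Hp|Hz]; [|auto].
    exfalso. set (gam := Cmod (g j)) in *.
    apply cvto_is_lim in Hlim. destruct (Hlim (gam / 2)) as [N1 HN1]; [lra|].
    set (Ca := Cmod (alpha j) ^ 2 * INR (S j) ^ 2).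
    assert (HCa : 0 <= Ca) by (unfold Ca; apply Rmult_le_pos; apply pow2_ge_0).
    set (q := (gam / 2) ^ 2).
    assert (Hq : 0 < q) by (unfold q; apply pow_lt; lra).
    destruct (small_inv (q / (Ca + 1))) as [N2 HN2]; [apply Rdiv_lt_0_compat; lra|].
    set (n := Nat.max N1 N2).
    set (k := psi (phi n)).
    assert (Hkn : (n <= k)%nat).
    { unfold k. pose proof (incr_ge _ Hpsi (phi n)). pose proof (incr_ge _ Hphi' n). lia. }
    assert (HX : INR N2 + 1 <= INR (2 ^ k)).
    { rewrite <- S_INR. apply le_INR. pose proof (pow2_gt k). unfold n in Hkn. lia. }
    pose proof (t_pos k) as Ht.
    assert (HY : 0 < INR N2 + 1) by (pose proof (pos_INR N2); lra).
    assert (Hsq : Cmod (rhaly alpha (F (phi n)) j) ^ 2 <= Ca / INR (2 ^ k)).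
    { unfold F. fold k. rewrite rhaly_T_sq. unfold Ca, Rdiv.
      apply Rmult_le_compat_r; [left; apply Rinv_0_lt_compat; lra|].
      apply Rmult_le_compat_l; [apply pow2_ge_0|]. apply pow_incr. split; [apply pos_INR|].
      apply le_INR. apply Nat.le_min_l. }
    assert (Hsm : Ca / INR (2 ^ k) < q).
    { apply Rle_lt_trans with ((Ca + 1) * / (INR N2 + 1)).
      - unfold Rdiv. apply Rmult_le_compat; try lra.
        + left; apply Rinv_0_lt_compat; lra.
        + apply Rinv_le_contravar; lra.
      - apply Rmult_lt_reg_l with (/ (Ca + 1)). { apply Rinv_0_lt_compat; lra. }
        rewrite <- Rmult_assoc, Rinv_l by lra. rewrite Rmult_1_l.
        unfold Rdiv in HN2. rewrite Rmult_comm. exact HN2. }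
    assert (H3 : Cmod (rhaly alpha (F (phi n)) j) < gam / 2).
    { pose proof (Cmod_ge_0 (rhaly alpha (F (phi n)) j)).
      assert (Cmod (rhaly alpha (F (phi n)) j) ^ 2 < (gam / 2) ^ 2) by (fold q; lra).
      destruct (Rle_or_lt (gam / 2) (Cmod (rhaly alpha (F (phi n)) j))); [|auto].
      assert ((gam / 2) ^ 2 <= Cmod (rhaly alpha (F (phi n)) j) ^ 2) by (apply pow_incr; lra). lra. }
    assert (H4 : Cmod (Cminus (rhaly alpha (F (phi n)) j) (g j)) < gam / 2).
    { eapply Rle_lt_trans.
      - apply (term_le_l2norm (fun j => Cminus (rhaly alpha (F (phi n)) j) (g j))).
        apply l2_minus; auto.
      - specialize (HN1 n ltac:(unfold n; lia)). rewrite Rminus_0_r in HN1.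
        rewrite Rabs_right in HN1 by (apply Rle_ge; unfold l2norm; apply sqrt_pos). exact HN1. }
    assert (H5 : gam <= Cmod (rhaly alpha (F (phi n)) j) + Cmod (Cminus (rhaly alpha (F (phi n)) j) (g j))).
    { unfold gam. pose proof (Cmod_triangle (rhaly alpha (F (phi n)) j) (Copp (Cminus (rhaly alpha (F (phi n)) j) (g j)))).
      rewrite Cmod_opp in H0.
      replace (Cplus (rhaly alpha (F (phi n)) j) (Copp (Cminus (rhaly alpha (F (phi n)) j) (g j)))) with (g j) in H0 by ring.
      exact H0. }
    lra. }
  assert (Hl : forall n, l2norm (fun j => Cminus (rhaly alpha (F (phi n)) j) (g j)) = l2norm (rhaly alpha (F (phi n)))).
  { intros n. unfold l2norm. f_equal. apply Series_ext. intros j. f_equal. f_equal.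
    rewrite (Cmod_eq_0 _ (Hg0 j)). ring. }
  apply cvto_is_lim in Hlim. destruct (Hlim (eps / 2)) as [N HN]; [lra|].
  specialize (HN N (le_n N)). rewrite Hl, Rminus_0_r in HN.
  specialize (HP (phi N)).
  pose proof (blk_le_T alpha (psi (phi N)) (HRF (phi N))) as HB.
  set (S0 := Series (fun j => Cmod (rhaly alpha (T (psi (phi N))) j) ^ 2)) in *.
  assert (HS0 : 0 <= S0) by (apply Series_nonneg; [intros; apply pow2_ge_0|apply (HRF (phi N))]).
  unfold l2norm, F in HN. fold S0 in HN.
  rewrite Rabs_right in HN by (apply Rle_ge, sqrt_pos).
  assert (sqrt S0 ^ 2 <= (eps / 2) ^ 2) by (apply pow_incr; split; [apply sqrt_pos|lra]).
  rewrite pow2_sqrt in H by auto.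
  assert (0 < eps ^ 2) by (apply pow_lt; lra).
  replace ((eps / 2) ^ 2) with (eps ^ 2 / 4) in H by field.
  lra.
Qed.

Theorem theorem2p7 (alpha : nat -> C) (Halpha : l2 alpha) :
  compact_l2_op (rhaly alpha) <-> is_lim_seq (rhaly_sigma alpha) 0%R.
Proof.
  split; [apply forward|apply backward].
Qed.
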